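(* Let $G$ be a finite simple connected graph. If $c_{\infty}(G)=1$ then $G$ has no hallway.
   Context: Cops and Robber with an infinitely fast robber: the game is played on a graph $G$. A set of cops first choose initial vertices (several cops may share a vertex); then the robber, knowing their positions, chooses a vertex. Then the players move in alternating rounds, cops first. In the cops' turn each cop either stays or moves to an adjacent vertex; in the robber's turn she either stays or moves along any path of $G$ starting at her current vertex that contains no vertex currently occupied by a cop. The cops win if at some point a cop moves to the vertex occupied by the robber. $c_{\infty}(G)$ is the minimum number of cops for which the cops have a strategy that guarantees a win. A block of $G$ is either a maximal 2-connected subgraph or an edge not contained in any 2-connected subgraph. The block tree $B(G)$ is the bipartite tree whose vertices are the blocks and cut vertices of $G$, a block $B$ adjacent to a cut vertex $v$ iff $v\in V(B)$. If $u$ is a cut vertex and $B$ a block containing $u$ such that some vertex of $B$ is neither $u$ nor adjacent to $u$, then $(B,u)$ is a directed hole. For distinct blocks $B,B'$ with unique $(B,B')$-path $B\,u_1\cdots u_k\,B'$ in $B(G)$, $\{B,B'\}$ is a hallway if $(B,u_1)$ and $(B',u_k)$ are both directed holes. *)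

(* Defs.v *)
From mathcomp Require Import all_boot.
Set Implicit Arguments. Unset Strict Implicit. Unset Printing Implicit Defensive.

Section Graph.
Variables (T : finType) (e : rel T).

(* connectivity inside the subgraph induced by S (start vertex assumed in S) *)
Definition induced_rel (S : {set T}) : rel T := [rel x y | e x y && (y \in S)].
Definition connected_on (S : {set T}) : Prop :=
  forall x y, x \in S -> y \in S -> connect (induced_rel S) x y.
Definition graph_connected : Prop := forall x y, connect e x y.

Definition two_connected (S : {set T}) : Prop :=
  2 < #|S| /\ connected_on S /\ forall v, v \in S -> connected_on (S :\ v).

(* blocks, represented by their vertex sets (maximal 2-connected subgraphs are
   induced); a bridge block is {x, y} with xy an edge lying in no 2-connected
   subgraph *)
Definition is_block (B : {set T}) : Prop :=
  (two_connected B /\ forall B' : {set T}, B \proper B' -> ~ two_connected B') \/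
  (exists x y, e x y /\ B = [set x; y] /\
     forall S : {set T}, x \in S -> y \in S -> ~ two_connected S).

Definition cut_vertex (v : T) : Prop := ~ connected_on ([set: T] :\ v).

Definition directed_hole (B : {set T}) (u : T) : Prop :=
  cut_vertex u /\ is_block B /\ u \in B /\
  exists w, [/\ w \in B, w != u & ~~ e u w].

(* {B,B'} is a hallway: B u_1 B_1 ... u_k B' is the (unique) path between B
   and B' in the block tree B(G), and (B,u_1), (B',u_k) are directed holes *)
Definition hallway (B B' : {set T}) : Prop :=
  is_block B /\ is_block B' /\ B != B' /\
  exists (k : nat) (Bs : nat -> {set T}) (us : nat -> T),
    0 < k /\ Bs 0 = B /\ Bs k = B' /\
    (forall i, i <= k -> is_block (Bs i)) /\
    (forall i j, i <= k -> j <= k -> Bs i = Bs j -> i = j) /\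
    (forall i, 0 < i <= k -> [/\ cut_vertex (us i), us i \in Bs i.-1 & us i \in Bs i]) /\
    (forall i j, 0 < i <= k -> 0 < j <= k -> us i = us j -> i = j) /\
    directed_hole B (us 1) /\ directed_hole B' (us k).

(* Cops and robber with an infinitely fast robber, k cops *)
Definition occupied k (C : {ffun 'I_k -> T}) : {set T} := [set C i | i in 'I_k].
Definition cop_move k (C C' : {ffun 'I_k -> T}) : bool :=
  [forall i, (C' i == C i) || e (C i) (C' i)].
Definition robber_reach (occ : {set T}) : rel T := [rel x y | e x y && (y \notin occ)].

(* cop_win C r : with cops at C, robber at r, cops to move, the cops can force
   a capture in finitely many rounds (least fixed point) *)
Inductive cop_win k : {ffun 'I_k -> T} -> T -> Prop :=
| cop_win_step (C C' : {ffun 'I_k -> T}) (r : T) :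
    cop_move C C' ->
    (r \in occupied C' \/
     forall r', connect (robber_reach (occupied C')) r r' -> cop_win C' r') ->
    cop_win C r.

Definition cops_win (k : nat) : Prop :=
  exists C0 : {ffun 'I_k -> T}, forall r : T, cop_win C0 r.

Definition c_infty_eq (k : nat) : Prop :=
  cops_win k /\ forall j, j < k -> ~ cops_win j.

End Graph.

(* Main.v *)
Require Import Defs.
From mathcomp Require Import all_boot.
From mathcomp Require Import zify.
Set Implicit Arguments. Unset Strict Implicit. Unset Printing Implicit Defensive.

Section S.
Variables (T : finType) (e : rel T).
Hypothesis esym : symmetric e.
Hypothesis eirr : irreflexive e.

Definition er (A : {set T}) : rel T := [rel x y | [&& x \in A, y \in A & e x y]].
Definition cn (A : {set T}) := connect (er A).

Lemma er_sym (A : {set T}) : symmetric (er A).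
Proof. by move=> x y; rewrite /er /= esym andbCA. Qed.

Lemma cn_sym (A : {set T}) x y : cn A x y = cn A y x.
Proof. by exact: (sym_connect_sym (er_sym A)). Qed.

Lemma cn_trans (A : {set T}) x y z : cn A x y -> cn A y z -> cn A x z.
Proof. exact: connect_trans. Qed.

Lemma cn1 (A : {set T}) x y : x \in A -> y \in A -> e x y -> cn A x y.
Proof. by move=> hx hy he; apply: connect1; apply/and3P. Qed.

Lemma cn_mono (A A' : {set T}) x y : A \subset A' -> cn A x y -> cn A' x y.
Proof.
move=> sub; apply: connect_sub => u v /= /and3P [hu hv he].
by apply: connect1; apply/and3P; rewrite (subsetP sub _ hu) (subsetP sub _ hv) he.
Qed.

Lemma cn_in (A : {set T}) x y : cn A x y -> x \in A -> y \in A.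
Proof.
case/connectP => p; elim: p x => [|h t IH] x /=; first by move=> _ -> .
by case/andP => /and3P [_ hh _] hp hl _; apply: (IH h hp hl hh).
Qed.

Lemma path_in (A : {set T}) x p : path (er A) x p -> forall y, y \in p -> y \in A.
Proof.
elim: p x => [|h t IH] x //= /andP [/and3P [_ hh _] hp] y.
by rewrite in_cons => /orP [/eqP ->|]; [ | apply: IH hp y].
Qed.

Lemma conn_cn (S : {set T}) x y : connected_on e S -> x \in S -> y \in S -> cn S x y.
Proof.
move=> hc hx hy; move: (hc x y hx hy) => /connectP [p].
elim: p x hx => [|h t IH] x hx /=; first by move=> _ ->; apply: connect0.
case/andP => /andP [he hh] hp hl.
by apply: cn_trans (IH h hh hp hl); apply: cn1.
Qed.

Lemma cn_conn (S : {set T}) : (forall x y, x \in S -> y \in S -> cn S x y) -> connected_on e S.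
Proof.
move=> h x y hx hy; move: (h x y hx hy); apply: connect_sub => u v /= /and3P [_ hv he].
by apply: connect1; apply/andP.
Qed.

Lemma LU (A C : {set T}) c : connected_on e A -> connected_on e C -> c \in A -> c \in C ->
  connected_on e (A :|: C).
Proof.
move=> hA hC cA cC; apply: cn_conn.
have gen : forall x, x \in A :|: C -> cn (A :|: C) x c.
  move=> x; rewrite inE => /orP [xA|xC].
    by apply: (cn_mono (subsetUl A C)); apply: conn_cn.
  by apply: (cn_mono (subsetUr A C)); apply: conn_cn.
by move=> x y hx hy; apply: cn_trans (gen x hx) _; rewrite cn_sym; apply: gen.
Qed.

Lemma LP x s : path e x s -> connected_on e [set y in x :: s].
Proof.
move=> hp; apply: cn_conn.
suff gen : forall y, y \in x :: s -> cn [set y in x :: s] x y.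
  by move=> a b; rewrite !inE => ha hb; apply: cn_trans _ (gen b hb); rewrite cn_sym; apply: gen.
elim: s x hp => [|h t IH] x /=.
  by move=> _ y; rewrite inE => /eqP ->; apply: connect0.
case/andP=> he hp y; rewrite in_cons => /orP [/eqP ->|hy]; first by apply: connect0.
apply: (@cn_trans _ _ h); first by apply: cn1; rewrite // !inE eqxx ?orbT.
apply: (cn_mono _ (IH h hp y hy)).
by apply/subsetP => z; rewrite !inE => ->; rewrite orbT.
Qed.

Lemma LP' x s : path e x s -> connected_on e [set y in s].
Proof.
case: s => [|h t] /=.
  by move=> _ a b; rewrite inE.
by case/andP => _; apply: LP.
Qed.


Definition wc (S : {set T}) := connected_on e S /\ forall v, connected_on e (S :\ v).

Lemma setD1_id (S : {set T}) v : v \notin S -> S :\ v = S.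
Proof.
move=> hv; apply/setP => z; rewrite !inE; case: eqP => // ->.
by rewrite (negbTE hv).
Qed.

Lemma tc_wc S : two_connected e S -> wc S.
Proof.
case=> _ [hc hd]; split => // v; case: (boolP (v \in S)) => hv; first exact: hd.
by rewrite setD1_id.
Qed.

Lemma pair_adj x y a b : e x y -> a \in [set x; y] -> b \in [set x; y] -> (a == b) || e a b.
Proof.
move=> he; rewrite !inE => /orP [] /eqP -> /orP [] /eqP ->; rewrite ?eqxx ?he ?orbT //; by rewrite esym he orbT.
Qed.

Lemma pair_conn x y (S : {set T}) : e x y -> S \subset [set x; y] -> connected_on e S.
Proof.
move=> he sub; apply: cn_conn => a b ha hb.
case/orP: (pair_adj he (subsetP sub _ ha) (subsetP sub _ hb)) => [/eqP ->|hab].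
  exact: connect0.
exact: cn1.
Qed.

Lemma blk_wc B : is_block e B -> wc B.
Proof.
case=> [[htc _]|[x [y [he [-> _]]]]]; first exact: tc_wc.
split; first by apply: (pair_conn he).
by move=> v; apply: (pair_conn he); apply: subD1set.
Qed.

Lemma exit (A P : {set T}) x y : cn A x y -> x \in A -> x \notin P -> y \in P ->
  exists d a, [/\ cn (A :\: P) x d, e d a, a \in P & a \in A].
Proof.
case/connectP => p; elim: p x => [|h t IH] x /=.
  by move=> _ -> hx hxP hyP; rewrite hyP in hxP.
case/andP => /and3P [_ hh he] hp hl hx hxP hyP.
case: (boolP (h \in P)) => hhP.
  by exists x, h; split => //; apply: connect0.
have [d [a [c1 c2 c3 c4]]] := IH h hp hl hh hhP hyP.
exists d, a; split => //; apply: cn_trans c1; apply: cn1 => //; by rewrite inE ?hxP ?hhP.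
Qed.

Lemma cn_comp (A : {set T}) x y : x \in A -> cn A x y -> cn [set v | cn A x v] x y.
Proof.
move=> hx /connectP [p].
suff gen : forall z, z \in A -> cn A x z -> path (er A) z p ->
  cn [set v | cn A x v] z (last z p).
  by move=> hp ->; apply: gen => //; apply: connect0.
elim: p => [|h t IH] z hz hxz /=; first by move=> _; apply: connect0.
case/andP => /and3P [_ hh he] hp.
have hxh : cn A x h by apply: cn_trans hxz (cn1 hz hh he).
apply: (@cn_trans _ _ h); last exact: IH.
by apply: cn1; rewrite // inE.
Qed.

Lemma TU S1 S2 x y : two_connected e S1 -> two_connected e S2 ->
  x \in S1 -> x \in S2 -> y \in S1 -> y \in S2 -> x != y -> two_connected e (S1 :|: S2).
Proof.
move=> h1 h2 x1 x2 y1 y2 xy.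
have [c1 d1] := tc_wc h1; have [c2 d2] := tc_wc h2.
split; first by case: h1 => hc _; apply: leq_trans hc (subset_leq_card (subsetUl _ _)).
split; first exact: (LU c1 c2 x1 x2).
move=> v _; rewrite setDUl.
case: (eqVneq x v) => [exv|xv].
  subst v; apply: (LU (d1 x) (d2 x) (c := y)); by rewrite !inE ?y1 ?y2 eq_sym xy.
by apply: (LU (d1 v) (d2 v) (c := x)); rewrite !inE ?x1 ?x2 xv.
Qed.

Lemma pairE (a b x y : T) : x \in [set a; b] -> y \in [set a; b] -> x != y -> [set a; b] = [set x; y].
Proof.
rewrite !inE => /orP [] /eqP -> /orP [] /eqP ->; rewrite ?eqxx // => _; exact: setUC.
Qed.

Lemma blkI B B' x y : is_block e B -> is_block e B' -> x \in B -> x \in B' ->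
  y \in B -> y \in B' -> x != y -> B = B'.
Proof.
move=> hB hB' xB xB' yB yB' xy.
case: hB => [[tB mB]|[x1 [y1 [he1 [E1 n1]]]]]; case: hB' => [[tB' mB']|[x2 [y2 [he2 [E2 n2]]]]].
- have tU := TU tB tB' xB xB' yB yB' xy.
  case: (boolP (B \proper B :|: B')) => hp; first by case: (mB _ hp).
  have sub : B' \subset B.
    move: hp; rewrite properEneq subsetUl andbT negbK => /eqP h.
    by rewrite h subsetUr.
  case: (boolP (B' \proper B)) => hp'; first by case: (mB' _ hp').
  by move: hp'; rewrite properEneq sub andbT negbK => /eqP.
- exfalso; subst B'; have E := pairE xB' yB' xy.
  apply: (n2 B) => //.
    have: x2 \in [set x; y] by rewrite -E !inE eqxx.
    by rewrite !inE => /orP [] /eqP ->.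
  have: y2 \in [set x; y] by rewrite -E !inE eqxx orbT.
  by rewrite !inE => /orP [] /eqP ->.
- exfalso; subst B; have E := pairE xB yB xy.
  apply: (n1 B') => //.
    have: x1 \in [set x; y] by rewrite -E !inE eqxx.
    by rewrite !inE => /orP [] /eqP ->.
  have: y1 \in [set x; y] by rewrite -E !inE eqxx orbT.
  by rewrite !inE => /orP [] /eqP ->.
- by subst; rewrite (pairE xB yB xy) (pairE xB' yB' xy).
Qed.


Lemma ear_conn (B : {set T}) a b s : connected_on e B -> (forall v, connected_on e (B :\ v)) ->
  a \in B -> b \in B -> a != b -> path e a s -> e (last a s) b -> uniq s ->
  (forall z, z \in s -> z \notin B) ->
  connected_on e (B :|: [set z in s]) /\
  forall v, v \in B :|: [set z in s] -> connected_on e ((B :|: [set z in s]) :\ v).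
Proof.
move=> cB dB aB bB ab hp hl hu hin.
have hpb : path e a (rcons s b) by rewrite rcons_path hp hl.
split.
  have -> : B :|: [set z in s] = B :|: [set z in a :: s].
    apply/setP => z; rewrite !inE; case: (z =P a) => [->|] //=; by rewrite aB.
  by apply: (LU cB (LP hp) (c := a)); rewrite ?inE ?aB ?eqxx.
move=> v; rewrite inE => /orP [vB|]; last rewrite inE => vs.
  case: (eqVneq a v) => [av|av].
    subst v.
    have -> : (B :|: [set z in s]) :\ a = (B :\ a) :|: [set z in rcons s b].
      apply/setP => z; rewrite !inE mem_rcons in_cons.
      case: (z =P a) => [->|/eqP za] /=.
        rewrite (negbTE ab) /=; symmetry; apply/negP => /hin; by rewrite aB.
      by case: (z =P b) => [->|] //=; rewrite bB orbT.
    apply: (LU (dB a) (LP' hpb) (c := b)); by rewrite ?inE ?mem_rcons ?in_cons ?eqxx // eq_sym ab.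
  have -> : (B :|: [set z in s]) :\ v = (B :\ v) :|: [set z in a :: s].
    apply/setP => z; rewrite !inE.
    case: (z =P v) => [->|/eqP zv] /=.
      rewrite eq_sym (negbTE av) /=; symmetry; apply/negP => /hin; by rewrite vB.
    by case: (z =P a) => [->|] //=; rewrite aB.
  by apply: (LU (dB v) (LP hp) (c := a)); rewrite ?inE ?eqxx ?av // eq_sym av.
have [s1 [s2 Es]] : exists s1 s2, s = s1 ++ v :: s2.
  by case/splitPr: vs => s1 s2; exists s1, s2.
subst s.
move: hu; rewrite cat_uniq /= => /and4P [_ /norP [vs1 _] vs2 _].
move: hp; rewrite cat_path => /andP [hp1 hp2].
move: hl; rewrite last_cat /= => hl.
have hp2' : path e v (rcons s2 b) by rewrite rcons_path; move: hp2 => /= /andP [_ ->].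
have vB : v \notin B by apply: hin; rewrite mem_cat in_cons eqxx orbT.
have -> : (B :|: [set z in s1 ++ v :: s2]) :\ v =
   (B :|: [set z in a :: s1]) :|: [set z in rcons s2 b].
  apply/setP => z; rewrite !inE mem_cat mem_rcons !in_cons.
  case: (z =P v) => [->|/eqP zv] /=.
    symmetry; apply/negP; rewrite (negbTE vB) (negbTE vs1) (negbTE vs2) !orbF.
    by rewrite /= => /orP [] /eqP E; move: vB; rewrite E ?aB ?bB.
  case: (z =P a) => [->|] /=; first by rewrite aB.
  case: (z =P b) => [->|] /=; first by rewrite bB.
  by move=> _ _; rewrite orbA.
apply: (LU (c := b)); last by rewrite ?inE mem_rcons in_cons eqxx.
- apply: (LU cB (LP hp1) (c := a)); by rewrite ?inE ?aB ?eqxx.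
- exact: (LP' hp2').
by rewrite ?inE bB.
Qed.

Lemma noear B a b d1 d2 : is_block e B -> a \in B -> b \in B -> a != b ->
  d1 \notin B -> e a d1 -> e d2 b -> cn (~: B) d1 d2 -> False.
Proof.
move=> hB aB bB ab d1B ha hb /connectP [p0 hp0 hl0].
move: hl0; case/shortenP: hp0 => p hp hu _ hl.
have hin : forall z, z \in d1 :: p -> z \notin B.
  move=> z; rewrite in_cons => /orP [/eqP -> //|hz].
  by have := path_in hp hz; rewrite inE.
have hpe : path e a (d1 :: p).
  rewrite /= ha; apply: (sub_path _ hp) => u v /= /and3P [_ _ ->] //.
have [cB dB] := blk_wc hB.
have hl' : e (last a (d1 :: p)) b by rewrite /= -hl.
have [cS dS] := ear_conn cB dB aB bB ab hpe hl' hu hin.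
set S := B :|: [set z in d1 :: p] in cS dS.
have d1S : d1 \in S by rewrite !inE eqxx orbT.
have card : 2 < #|S|.
  have h2 : 2 <= #|B|.
    by have := subset_leq_card (_ : [set a; b] \subset B); rewrite cards2 ab; apply;
      apply/subsetP => z; rewrite !inE => /orP [] /eqP ->.
  have : #|d1 |: B| <= #|S|.
    apply: subset_leq_card; apply/subsetP => z; rewrite !inE => /orP [/eqP ->|->] //.
    by rewrite eqxx orbT.
  by rewrite cardsU1 d1B; apply: leq_trans.
have tS : two_connected e S by split => //; split.
case: hB => [[_ mB]|[x [y [he [EB nB]]]]].
  apply: (mB S) => //; rewrite properE subsetUl /=; apply/subsetPn; exists d1 => //.
apply: (nB S) => //; rewrite inE EB !inE eqxx ?orbT //.
Qed.

Lemma sep B B' u y z : is_block e B -> is_block e B' -> B != B' -> u \in B -> u \in B' ->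
  y \in B -> y != u -> z \in B' -> z != u -> cn (~: [set u]) y z -> False.
Proof.
move=> hB hB' nBB uB uB' yB yu zB' zu hc.
have zB : z \notin B.
  apply/negP => zB; move/eqP: nBB; apply; exact: (blkI hB hB' zB zB' uB uB' zu).
have zA : z \in ~: [set u] by rewrite !inE.
have hc' : cn (~: [set u]) z y by rewrite cn_sym.
have [d [a [c1 c2 c3 c4]]] := exit hc' zA zB yB.
have [cB' _] := blk_wc hB'.
have hz := conn_cn cB' zB' uB'.
have [d' [a' [c1' c2' c3' c4']]] := exit hz zB' zB uB.
have a'u : a' = u.
  case: (eqVneq a' u) => // h; exfalso; move/eqP: nBB; apply; exact: (blkI hB hB' c3' c4' uB uB' h).
subst a'.
have s1 : ~: [set u] :\: B \subset ~: B by apply/subsetP => w; rewrite !inE => /andP [].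
have s2 : B' :\: B \subset ~: B by apply/subsetP => w; rewrite !inE => /andP [].
have hdd : cn (~: B) d d'.
  apply: (@cn_trans _ _ z); first by rewrite cn_sym; apply: (cn_mono s1 c1).
  exact: (cn_mono s2 c1').
have dB : d \notin B.
  have : d \in ~: [set u] :\: B by apply: (cn_in c1); rewrite !inE zB.
  by rewrite !inE => /andP [].
have au : a != u by move: c4; rewrite !inE.
apply: (noear hB c3 uB au dB _ c2' hdd); by rewrite esym.
Qed.

Lemma chain k (Bs : nat -> {set T}) (us : nat -> T) w w' :
  0 < k ->
  (forall i, i <= k -> is_block e (Bs i)) ->
  (forall i j, i <= k -> j <= k -> Bs i = Bs j -> i = j) ->
  (forall i, 0 < i <= k -> us i \in Bs i.-1 /\ us i \in Bs i) ->
  (forall i j, 0 < i <= k -> 0 < j <= k -> us i = us j -> i = j) ->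
  w \in Bs 0 -> w != us 1 -> w' \in Bs k -> w' != us k ->
  ~ cn (~: [set us 1]) w w' /\ w' != us 1.
Proof.
move=> k0 hb hinj hus husi wB wu w'B w'u.
have nB : forall i j, i <= k -> j <= k -> i != j -> Bs i != Bs j.
  by move=> i j hi hj ij; apply/eqP => E; move/eqP: ij; apply; apply: hinj.
have nU : forall i j, 0 < i <= k -> 0 < j <= k -> i != j -> us i != us j.
  by move=> i j hi hj ij; apply/eqP => E; move/eqP: ij; apply; apply: husi.
have sub_out : forall i, us 1 \notin Bs i -> Bs i \subset ~: [set us 1].
  by move=> i hi; apply/subsetP => x hx; rewrite !inE; apply/eqP => E; rewrite -E hx in hi.
case: k k0 hb hinj hus husi nB nU w'B w'u => [//|[|n]] _ hb hinj hus husi nB nU w'B w'u.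
  split => //; move=> hc.
  apply: (sep (hb 0 isT) (hb 1 isT) (nB 0 1 isT isT isT) (hus 1 isT).1 (hus 1 isT).2 wB wu w'B w'u hc).
have claim : forall m, m.+2 <= n.+2 -> cn (~: [set us 1]) (us 2) (us m.+2) /\ us 1 \notin Bs m.+2.
  have u2B1 : us 2 \in Bs 1 by exact: (hus 2 isT).1.
  have u1B1 : us 1 \in Bs 1 by exact: (hus 1 isT).2.
  have u21 : us 2 != us 1 by apply: nU.
  elim => [|m IH] hm.
    split; first exact: connect0.
    apply/negP => uB2.
    by apply: (sep (hb 1 isT) (hb 2 isT) (nB 1 2 isT isT isT) u1B1 uB2 u2B1 u21 (hus 2 isT).2 u21 (connect0 _ _)).
  have [c ub] := IH (ltnW hm).
  have hc : cn (~: [set us 1]) (us 2) (us m.+3).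
    apply: (cn_trans c); apply: (cn_mono (sub_out _ ub)).
    apply: conn_cn; first exact: (blk_wc (hb m.+2 (ltnW hm))).1.
      exact: (hus m.+2 (ltnW hm)).2.
    exact: (hus m.+3 hm).1.
  split => //; apply/negP => uB.
  have um : us m.+3 != us 1 by apply: nU.
  by apply: (sep (hb 1 isT) (hb m.+3 hm) (nB 1 m.+3 isT hm isT) u1B1 uB u2B1 u21 (hus m.+3 hm).2 um hc).
have [c ub] := claim n (leqnn _).
split; last by apply/negP => /eqP E; rewrite -E w'B in ub.
move=> hc.
have hc2 : cn (~: [set us 1]) w (us 2).
  apply: (cn_trans hc); rewrite cn_sym; apply: (cn_trans c).
  rewrite cn_sym; apply: (cn_mono (sub_out _ ub)); apply: conn_cn => //.
    exact: (blk_wc (hb n.+2 (leqnn _))).1.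
  exact: (hus n.+2 (leqnn _)).2.
by apply: (sep (hb 0 isT) (hb 1 isT) (nB 0 1 isT isT isT) (hus 1 isT).1 (hus 1 isT).2 wB wu (hus 2 isT).1 (nU 2 1 isT isT isT) hc2).
Qed.

Section Game.
Variables (B : {set T}) (u w w' : T).
Hypotheses (gc : graph_connected e) (tB : two_connected e B) (uB : u \in B) (wB : w \in B)
  (wu : w != u) (euw : ~~ e u w) (nc : ~ cn (~: [set u]) w w') (w'u : w' != u).

Lemma far_cn x : (x == w) || e w x -> cn (~: [set u]) w x.
Proof.
case/orP => [/eqP ->|hx]; first exact: connect0.
apply: cn1 => //; rewrite !inE //; apply/eqP => E; move: euw; by rewrite -E esym hx.
Qed.

Lemma far x : (x == w) || e w x -> (x != w') && ~~ e x w'.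
Proof.
move=> hx; have hc := far_cn hx.
apply/andP; split; first by apply/eqP => E; apply: nc; rewrite -E.
apply/negP => he; apply: nc; apply: (cn_trans hc); apply: cn1 => //.
  by apply: (cn_in hc); rewrite !inE.
by rewrite !inE.
Qed.

Lemma esc x : e w x -> cn (~: [set x]) w w'.
Proof.
move=> hx.
have xu : x != u by apply/eqP => E; move: euw; rewrite -E esym hx.
have xw : x != w by apply/eqP => E; move: hx; rewrite E eirr.
have p1 : cn (~: [set x]) w u.
  have [_ dB] := tc_wc tB.
  apply: (cn_mono _ (conn_cn (dB x) _ _)).
  - by apply/subsetP => z; rewrite !inE => /andP [].
  - by rewrite !inE eq_sym xw.
  - by rewrite !inE eq_sym xu.
have hg : cn [set: T] w' u.
  move: (gc w' u); apply: connect_sub => a b hab; apply: cn1; by rewrite ?inE.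
have w'nu : w' \notin [set u] by rewrite inE.
have [d [a [c1 c2 c3 _]]] := exit hg (in_setT _) w'nu (set11 u).
move: c3; rewrite inE => /eqP ?; subst a.
rewrite setTD in c1.
have w'A : w' \in ~: [set u] by rewrite !inE.
have cD := cn_comp w'A c1.
have xD : x \notin [set v | cn (~: [set u]) w' v].
  rewrite inE; apply/negP => h; apply: nc; apply: (cn_trans (far_cn (x:=x) _)).
    by rewrite hx orbT.
  by rewrite cn_sym.
have sD : [set v | cn (~: [set u]) w' v] \subset ~: [set x].
  apply/subsetP => z hz; rewrite !inE; apply/eqP => E; by rewrite -E hz in xD.
have c3 := cn_mono sD cD.
apply: (cn_trans p1); rewrite cn_sym; apply: (cn_trans c3); apply: cn1 => //.
  by apply: (cn_in c3); rewrite !inE; apply/eqP => E; move: xD; rewrite inE -E; move/negP; apply; apply: connect0.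
by rewrite !inE eq_sym.
Qed.
End Game.

Lemma half (w w' c c' : T) :
  (forall x, (x == w) || e w x -> (x != w') && ~~ e x w') ->
  (forall x, e w x -> cn (~: [set x]) w w') ->
  ~~ ((c == w) || e w c) -> (c' == c) || e c c' ->
  w != c' /\ exists r', cn (~: [set c']) w r' /\
   ((r' = w /\ ~~ ((c' == w) || e w c')) \/ (r' = w' /\ ~~ ((c' == w') || e w' c'))).
Proof.
move=> hfar hesc hc hm.
have wc' : w != c'.
  apply/eqP => E; subst c'; case/orP: hm => [/eqP E|he]; move: hc; by rewrite ?E ?eqxx // esym he orbT.
split => //.
case: (boolP ((c' == w) || e w c')) => hn; last first.
  by exists w; split; [apply: connect0 | left].
have hwc : e w c' by move: hn; rewrite eq_sym (negbTE wc').
exists w'; split; first exact: hesc.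
right; split => //; have /andP [h1 h2] := hfar _ hn.
by rewrite negb_or h1 esym h2.
Qed.

End S.

Lemma ar1 k i : 0 < i <= k -> 0 < k.+1 - i <= k. Proof. lia. Qed.
Lemma ar2 k i : 0 < i <= k -> (k.+1 - i).-1 = k - i. Proof. lia. Qed.
Lemma ar3 k i : 0 < i -> k - i.-1 = k.+1 - i. Proof. lia. Qed.
Lemma ar4 k i j : i <= k -> j <= k -> k - i = k - j -> i = j. Proof. lia. Qed.
Lemma ar5 k i j : 0 < i <= k -> 0 < j <= k -> k.+1 - i = k.+1 - j -> i = j. Proof. lia. Qed.

Lemma cop_win_inv (T : finType) (e : rel T) k (P : {ffun 'I_k -> T} -> T -> Prop) :
  (forall C C' r, P C r -> cop_move e C C' -> r \notin occupied C' /\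
     exists r', connect (robber_reach e (occupied C')) r r' /\ P C' r') ->
  forall C r, cop_win e C r -> P C r -> False.
Proof.
move=> H; fix IH 3 => C r hw hP.
case: hw hP => C1 C' r1 hm hor hP.
have [hn [r' [hc hP']]] := H _ _ _ hP hm.
case: hor => [hin|hf]; first by rewrite hin in hn.
exact: (IH C' r' (hf r' hc) hP').
Qed.

Lemma occ1 (T : finType) (C : {ffun 'I_1 -> T}) : occupied C = [set C ord0].
Proof.
apply/setP => y; rewrite inE; apply/imsetP/eqP => [[i _ ->]|->]; first by rewrite (ord1 i).
by exists ord0.
Qed.

Lemma hole_tc (T : finType) (e : rel T) B u w : symmetric e -> is_block e B -> u \in B -> w \in B ->
  w != u -> ~~ e u w -> two_connected e B.
Proof.
move=> esym [[h _] //|[x [y [he [EB _]]]]] uB wB wu euw; exfalso.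
rewrite EB in uB wB; case/orP: (pair_adj esym he uB wB) => [/eqP E|h].
  by rewrite E eqxx in wu.
by rewrite h in euw.
Qed.

Unset Implicit Arguments.
Set Strict Implicit.

Theorem mainTheorem10 (T : finType) (e : rel T) :
  symmetric e -> irreflexive e -> graph_connected e ->
  c_infty_eq e 1 ->
  ~ (exists B B' : {set T}, hallway e B B').
Proof.
move=> esym eirr gc [[C0 hwin] _] [B [B' [hB [hB' [nBB [k [Bs [us
  [k0 [E0 [Ek [hb [hinj [hus [husi [dh1 dhk]]]]]]]]]]]]]]]].
case: dh1 => _ [_ [u1B [w [wB wu euw]]]].
case: dhk => _ [_ [ukB' [w' [w'B' w'u euw']]]].
have tB := hole_tc esym hB u1B wB wu euw.
have tB' := hole_tc esym hB' ukB' w'B' w'u euw'.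
have hus' : forall i, 0 < i <= k -> us i \in Bs i.-1 /\ us i \in Bs i.
  by move=> i hi; case: (hus i hi).
have wB0 : w \in Bs 0 by rewrite E0.
have w'Bk : w' \in Bs k by rewrite Ek.
have [nc1 w'u1] := chain esym k0 hb hinj hus' husi wB0 wu w'Bk w'u.
have [nc2 wuk] : ~ cn e (~: [set us k]) w' w /\ w != us k.
  have := @chain T e esym k (fun i => Bs (k - i)) (fun i => us (k.+1 - i)) w' w k0.
  have -> : k.+1 - 1 = k by rewrite subSS subn0.
  rewrite subn0 subnn Ek E0; apply => //.
  - by move=> i hi; apply: hb; apply: leq_subr.
  - move=> i j hi hj /hinj; move=> h; have := h (leq_subr _ _) (leq_subr _ _).
    exact: ar4.
  - move=> i /andP [hi0 hik].
    have h1 : 0 < k.+1 - i <= k by apply: ar1; rewrite hi0.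
    have [a b] := hus' _ h1.
    rewrite ar3 // -(ar2 (k:=k) (i:=i)) ?hi0 //.
  - move=> i j /andP [hi0 hik] /andP [hj0 hjk] E.
    have hi' : 0 < k.+1 - i <= k by apply: ar1; rewrite hi0.
    have hj' : 0 < k.+1 - j <= k by apply: ar1; rewrite hj0.
    have := husi _ _ hi' hj' E => E2.
    apply: (ar5 (k:=k)) => //; by rewrite ?hi0 ?hj0.
  - by rewrite subSnn.
have far1 := far esym wu euw nc1 w'u1.
have esc1 := esc esym eirr gc tB u1B wB wu euw nc1 w'u1.
have far2 := far esym w'u euw' nc2 wuk.
have esc2 := esc esym eirr gc tB' ukB' w'B' w'u euw' nc2 wuk.
pose P (C : {ffun 'I_1 -> T}) r :=
  (r = w /\ ~~ ((C ord0 == w) || e w (C ord0))) \/ (r = w' /\ ~~ ((C ord0 == w') || e w' (C ord0))).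
have conv : forall (C : {ffun 'I_1 -> T}) x y, cn e (~: [set C ord0]) x y ->
    connect (robber_reach e [set C ord0]) x y.
  move=> C x y; apply: connect_sub => a b /and3P [_ hb' he].
  by apply: connect1; apply/andP; split => //; move: hb'; rewrite !inE.
have step : forall C C' r, P C r -> cop_move e C C' -> r \notin occupied C' /\
     exists r', connect (robber_reach e (occupied C')) r r' /\ P C' r'.
  move=> C C' r hP /forallP /(_ ord0) hm.
  rewrite occ1 inE.
  case: hP => [[-> hc]|[-> hc]].
    have [hn [r' [hc' hP']]] := half esym far1 esc1 hc hm.
    split; first exact: hn.
    by exists r'; split => //; apply: conv.
  have [hn [r' [hc' hP']]] := half esym far2 esc2 hc hm.
  split; first exact: hn.
  exists r'; split; first exact: conv.
  by case: hP' => [[-> h]|[-> h]]; [right | left].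
case: (boolP ((C0 ord0 == w) || e w (C0 ord0))) => h0.
  apply: (cop_win_inv step (hwin w')); right; split => //.
  have /andP [h1 h2] := far1 _ h0.
  by rewrite negb_or h1 esym h2.
by apply: (cop_win_inv step (hwin w)); left.
Qed.
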